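(* Let $N\ge2$, let $\mathbf{A}\in\mathbb{R}^{q\times N}$ with $q<N$ have full row rank, let $\vec u\in\mathbb{R}^N$, $b=\mathbf{A}\vec u$, let $m<M$, $\alpha>0$, $\gamma>0$, $\lambda\in(0,2]$, and assume $\Lambda_1\cap\Lambda_2\ne\emptyset$ where $\Lambda_1=\{\vec x:\mathbf{A}\vec x=b\}$, $\Lambda_2=\{\vec x: m\le x_i\le M\ \forall i\}$. Let $\vec x^\ast$ be the unique minimizer of $\frac{\alpha}{2}\|\vec x-\vec u\|_2^2$ over $\Lambda_1\cap\Lambda_2$, let $i_1,\dots,i_r$ be the indices $j$ with $x^\ast_j\in\{m,M\}$, and let $\mathbf{B}=[\vec e_{i_1},\dots,\vec e_{i_r}]^{\mathsf T}\in\mathbb{R}^{r\times N}$ be the corresponding selector matrix ($\vec e_i$ the standard basis of $\mathbb{R}^N$). Let $\mathcal Q=Q_1\times\cdots\times Q_N$ with $Q_i=[M,+\infty)$ if $x_i^\ast=M$, $Q_i=(m,M)$ if $x^\ast_i\in(m,M)$, $Q_i=(-\infty,m]$ if $x^\ast_i=m$. Let $\mathrm{T}_\gamma=\frac{\lambda}{\gamma\alpha+1}\mathrm{P}\circ(2\mathrm{S}-\mathrm{I})+(\mathrm{I}-\lambda\mathrm{S})+\frac{\lambda\gamma\alpha}{\gamma\alpha+1}\vec u$, with $\mathrm{P}(\vec x)=\mathbf{A}^+(b-\mathbf{A}\vec x)+\vec x$, $\mathbf{A}^+=\mathbf{A}^{\mathsf T}(\mathbf{A}\mathbf{A}^{\mathsf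 T})^{-1}$, $[\mathrm{S}(\vec x)]_i=\min(\max(x_i,m),M)$. Then for any $\vec y$ in the interior of $\mathcal Q$ and any fixed point $\vec y^\ast$ of $\mathrm{T}_\gamma$ lying in the interior of $\mathcal Q$, $$\mathrm{T}_\gamma(\vec y)-\mathrm{T}_\gamma(\vec y^\ast)=\mathbf{T}_{c,\lambda}(\vec y-\vec y^\ast),$$ where $c=\frac{1}{\gamma\alpha+1}\in(0,1)$ and $$\mathbf{T}_{c,\lambda}=\lambda\Big(c(\mathbf{I}_N-\mathbf{A}^+\mathbf{A})(\mathbf{I}_N-\mathbf{B}^+\mathbf{B})+c\,\mathbf{A}^+\mathbf{A}\mathbf{B}^+\mathbf{B}+(1-c)\mathbf{B}^+\mathbf{B}\Big)+(1-\lambda)\mathbf{I}_N,$$ with $\mathbf{B}^+=\mathbf{B}^{\mathsf T}(\mathbf{B}\mathbf{B}^{\mathsf T})^{-1}$ (so $\mathbf{B}^+\mathbf{B}$ is the orthogonal projection onto $\mathrm{span}\{\vec e_{i_1},\dots,\vec e_{i_r}\}$, and is $0$ if $r=0$).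
   Context: $\mathbf{I}_N$ is the $N\times N$ identity matrix; $\mathrm{I}$ the identity operator. $\mathrm{T}_\gamma$ is the iteration operator of the generalized Douglas--Rachford splitting for minimizing $f+g$ with $f=\frac{\alpha}{2}\|\cdot-\vec u\|_2^2+\iota_{\Lambda_1}$ and $g=\iota_{\Lambda_2}$ ($\iota$ denoting indicator functions). *)

(* Defs.v *)
From HB Require Import structures.
From mathcomp Require Import all_boot all_order all_algebra.
Set Implicit Arguments. Unset Strict Implicit. Unset Printing Implicit Defensive.
Import Order.TTheory GRing.Theory Num.Theory.
Local Open Scope ring_scope.

Section Defs.
Variable R : realFieldType.

Definition pinv (p n : nat) (X : 'M[R]_(p, n)) : 'M[R]_(n, p) :=
  X^T *m invmx (X *m X^T).

Definition sqnorm (n : nat) (x : 'cV[R]_n) : R := \sum_(i < n) (x i 0) ^+ 2.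

Definition Lambda1 (q n : nat) (A : 'M[R]_(q, n)) (b : 'cV[R]_q) (x : 'cV[R]_n) : Prop :=
  A *m x = b.

Definition Lambda2 (n : nat) (m M : R) (x : 'cV[R]_n) : Prop :=
  forall i, m <= x i 0 <= M.

Definition objective (n : nat) (alpha : R) (u x : 'cV[R]_n) : R :=
  alpha / 2 * sqnorm (x - u).

Definition is_minimizer (q n : nat) (A : 'M[R]_(q, n)) (b : 'cV[R]_q)
    (m M alpha : R) (u xs : 'cV[R]_n) : Prop :=
  [/\ Lambda1 A b xs, Lambda2 m M xs &
      forall x, Lambda1 A b x -> Lambda2 m M x ->
        objective alpha u xs <= objective alpha u x].

Definition active (n : nat) (m M : R) (xs : 'cV[R]_n) : {set 'I_n} :=
  [set j | (xs j 0 == m) || (xs j 0 == M)].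

(* selector matrix B = [e_{i_1}, ..., e_{i_r}]^T, with i_1 < ... < i_r the
   active indices (enumerated in increasing order by enum_val) *)
Definition selector (n : nat) (m M : R) (xs : 'cV[R]_n)
    : 'M[R]_(#|active m M xs|, n) :=
  \matrix_(k < #|active m M xs|, j < n) (j == enum_val k)%:R.

Definition in_int_Q (n : nat) (m M : R) (xs y : 'cV[R]_n) : Prop :=
  forall i,
    [/\ xs i 0 = M -> M < y i 0,
        m < xs i 0 < M -> m < y i 0 < M &
        xs i 0 = m -> y i 0 < m].

Definition Sbox (n : nat) (m M : R) (x : 'cV[R]_n) : 'cV[R]_n :=
  \col_i Num.min (Num.max (x i 0) m) M.

Definition Paff (q n : nat) (A : 'M[R]_(q, n)) (b : 'cV[R]_q) (x : 'cV[R]_n)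
    : 'cV[R]_n :=
  pinv A *m (b - A *m x) + x.

Definition Tgamma (q n : nat) (A : 'M[R]_(q, n)) (b : 'cV[R]_q) (m M alpha gamma lambda : R)
    (u y : 'cV[R]_n) : 'cV[R]_n :=
  (lambda / (gamma * alpha + 1)) *: Paff A b (2%:R *: Sbox m M y - y)
  + (y - lambda *: Sbox m M y)
  + (lambda * gamma * alpha / (gamma * alpha + 1)) *: u.

Definition Tmat (q n r : nat) (A : 'M[R]_(q, n)) (B : 'M[R]_(r, n)) (c lambda : R)
    : 'M[R]_n :=
  lambda *: (c *: ((1%:M - pinv A *m A) *m (1%:M - pinv B *m B))
             + c *: (pinv A *m A *m (pinv B *m B))
             + (1 - c) *: (pinv B *m B))
  + (1 - lambda) *: 1%:M.

End Defs.

(* Main.v *)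
Require Import Defs.
From HB Require Import structures.
From mathcomp Require Import all_boot all_order all_algebra.
From mathcomp Require Import ring.
Import Order.TTheory GRing.Theory Num.Theory.
Local Open Scope ring_scope.

Lemma selector_BBt (R : realFieldType) N (m M : R) (xs : 'cV[R]_N) :
  selector m M xs *m (selector m M xs)^T = 1%:M.
Proof.
apply/matrixP => k l; rewrite !mxE.
rewrite (bigD1 (enum_val k)) //= big1 ?addr0.
  rewrite !mxE eqxx (inj_eq enum_val_inj) eq_sym mul1r.
  by case: (l == k).
by move=> j /negbTE Hj; rewrite !mxE Hj mul0r.
Qed.

Lemma selector_D (R : realFieldType) N (m M : R) (xs : 'cV[R]_N) i k :
  (pinv (selector m M xs) *m selector m M xs) i k
  = ((i == k) && (i \in active m M xs))%:R.
Proof.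
rewrite /pinv selector_BBt invmx1 mulmx1 !mxE.
case: (boolP (i \in active m M xs)) => Hi.
  rewrite (bigD1 (enum_rank_in Hi i)) //= big1 ?addr0.
    rewrite !mxE enum_rankK_in // eqxx mul1r andbT eq_sym; by case: (k == i).
  move=> l Hl; rewrite !mxE.
  case: eqP => [Ei|_]; last by rewrite mul0r.
  have E2 : enum_val l = enum_val (enum_rank_in Hi i) by rewrite enum_rankK_in.
  by rewrite (enum_val_inj E2) eqxx in Hl.
rewrite andbF big1 // => l _; rewrite !mxE.
case: eqP => [Ei|_]; last by rewrite mul0r.
by move: Hi; rewrite Ei enum_valP.
Qed.

Lemma Sbox_int (R : realFieldType) N (m M : R) (xs y : 'cV[R]_N) :
  m < M -> Lambda2 m M xs -> in_int_Q m M xs y ->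
  Sbox m M y = \col_i (if i \in active m M xs then xs i 0 else y i 0).
Proof.
move=> mM L2 Hy; apply/matrixP => i j; rewrite (ord1 j) !mxE inE.
have [H1 H2 H3] := Hy i.
case: (eqVneq (xs i 0) m) => [E|Nm] /=.
  have := H3 E => ylt.
  rewrite E (max_idPr (ltW ylt)) (min_idPl (ltW mM)) //.
case: (eqVneq (xs i 0) M) => [E|NM] /=.
  have := H1 E => ylt.
  rewrite E (max_idPl (ltW (lt_trans mM ylt))) (min_idPr (ltW ylt)) //.
have /andP[a b] := L2 i.
have : m < xs i 0 < M by rewrite !lt_neqAle a b eq_sym Nm NM.
move=> /H2 /andP[c e].
by rewrite (max_idPl (ltW c)) (min_idPl (ltW e)).
Qed.

Lemma Sdiff (R : realFieldType) N (m M : R) (xs y ys : 'cV[R]_N) :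
  m < M -> Lambda2 m M xs -> in_int_Q m M xs y -> in_int_Q m M xs ys ->
  Sbox m M y - Sbox m M ys =
  (y - ys) - (pinv (selector m M xs) *m selector m M xs) *m (y - ys).
Proof.
move=> mM L2 Hy Hys.
rewrite (Sbox_int _ _ _ _ _ _ mM L2 Hy) (Sbox_int _ _ _ _ _ _ mM L2 Hys).
apply/matrixP => i j; rewrite (ord1 j) !mxE.
rewrite (bigD1 i) //= big1 ?addr0; last first.
  by move=> k /negbTE Hk; rewrite selector_D eq_sym Hk /= mul0r.
rewrite selector_D eqxx /= !mxE.
by case: (i \in active m M xs); rewrite ?subrr ?mul1r ?mul0r ?subr0 ?subrr.
Qed.

Lemma scalemxAr' (R : realFieldType) (m n p : nat) (a : R) (A : 'M[R]_(m, n)) (B : 'M[R]_(n, p)) :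
  A *m (a *: B) = a *: (A *m B).
Proof. by rewrite scalemxAr. Qed.
Lemma scalemxAl' (R : realFieldType) (m n p : nat) (a : R) (A : 'M[R]_(m, n)) (B : 'M[R]_(n, p)) :
  (a *: A) *m B = a *: (A *m B).
Proof. by rewrite scalemxAl. Qed.

Theorem lemma2p2 (R : realFieldType) (N q : nat) (A : 'M[R]_(q, N))
    (u : 'cV[R]_N) (m M alpha gamma lambda : R) (xs y ys : 'cV[R]_N) :
  (2 <= N)%N -> (q < N)%N -> \rank A = q ->
  m < M -> 0 < alpha -> 0 < gamma -> 0 < lambda <= 2 ->
  (exists x, Lambda1 A (A *m u) x /\ Lambda2 m M x) ->
  is_minimizer A (A *m u) m M alpha u xs ->
  in_int_Q m M xs y ->
  in_int_Q m M xs ys ->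
  Tgamma A (A *m u) m M alpha gamma lambda u ys = ys ->
  Tgamma A (A *m u) m M alpha gamma lambda u y
    - Tgamma A (A *m u) m M alpha gamma lambda u ys
  = Tmat A (selector m M xs) (1 / (gamma * alpha + 1)) lambda *m (y - ys).
Proof.
move=> _ _ _ mM _ _ _ _ [_ L2 _] Hy Hys _.
have HS := Sdiff _ _ _ _ _ _ _ mM L2 Hy Hys.
rewrite /Tmat.
set D := pinv (selector m M xs) *m selector m M xs in HS *.
clearbody D.
have ES : Sbox m M y = Sbox m M ys + (Sbox m M y - Sbox m M ys) by rewrite addrC subrK.
rewrite /Tgamma /Paff ES HS.
move: (Sbox m M ys) => s.
move: (pinv A) => pA.
rewrite !(mulmxDr, mulmxBr, mulmxDl, mulmxBl, scalemxAr', scalemxAl', mulmxA, mul1mx, mulmx1, mulNmx, mulmxN).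
apply/matrixP => i j; rewrite !mxE.
ring.
Qed.
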